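(* Let $N\ge 1$, $B\in\mathbb{R}$, and for $i=1,\dots,N$ let $D_i>0$, $b_i>0$, $a_i\in\mathbb{R}$. For $q\in(0,1)$ define $c_i(q):=-\dfrac{a_i}{b_i}-\dfrac{1}{b_i}\big[\ln(1-q)-\ln q\big]$, and for $\bm q=(q_1,\dots,q_N)\in(0,1)^N$ define $$g(\bm q):=\sum_{i=1}^N D_i q_i\,c_i(q_i)-B.$$ Then $g$ is strongly convex on $(0,1)^N$.
   Context: $c_i(q)$ is the inverse of the logit market-share function $q_i(c)=1/(1+\exp\{-(a_i+b_ic)\})$, mapping a market share $q$ to the marketing cost achieving it; $g$ is the budget-constraint function (total cost minus budget $B$). *)

(* Defs.v *)
From HB Require Import structures.
From mathcomp Require Import all_boot all_order all_algebra.
From mathcomp Require Import all_classical all_reals all_analysis.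
Set Implicit Arguments. Unset Strict Implicit. Unset Printing Implicit Defensive.
Import Order.TTheory GRing.Theory Num.Theory.
Local Open Scope ring_scope.

Definition cost {R : realType} (a b q : R) : R :=
  - (a / b) - b^-1 * (ln (1 - q) - ln q).

Definition gfun {R : realType} (N : nat) (D a b : 'I_N -> R) (B : R)
  (q : 'I_N -> R) : R :=
  \sum_(i < N) D i * q i * cost (a i) (b i) (q i) - B.

Definition open_unit_box {R : realType} (N : nat) (q : 'I_N -> R) : Prop :=
  forall i, 0 < q i < 1.

Definition sqnorm {R : realType} (N : nat) (x : 'I_N -> R) : R :=
  \sum_(i < N) x i ^+ 2.

Definition strongly_convex_on {R : realType} (N : nat)
  (S : ('I_N -> R) -> Prop) (f : ('I_N -> R) -> R) : Prop :=
  exists mu : R, 0 < mu /\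
    forall (x y : 'I_N -> R) (t : R), S x -> S y -> 0 <= t <= 1 ->
      f (fun i => t * x i + (1 - t) * y i) <=
        t * f x + (1 - t) * f y
        - mu / 2%:R * t * (1 - t) * sqnorm (fun i => x i - y i).

(* Main.v *)
Require Import Defs.
From mathcomp Require Import all_boot all_order all_algebra.
From mathcomp Require Import all_classical all_reals all_analysis.
From mathcomp Require Import ring lra.
Import Order.TTheory GRing.Theory Num.Theory.
Local Open Scope ring_scope.

Set Implicit Arguments. Unset Strict Implicit.
Section S.
Variable R : realType.

Lemma ln_le_sub1 (w : R) : 0 < w -> ln w <= w - 1.
Proof.
move=> w0; have := @le_ln1Dx R (w - 1).
rewrite (_ : 1 + (w - 1) = w); last by rewrite addrC subrK.
by apply; lra.
Qed.

Lemma E_tan (p r : R) : 0 < p -> 0 < r ->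
  (p - r)^+2 <= p^+2 * ln (p^+2) - r^+2 * ln (r^+2) - (ln (r^+2) + 1) * (p^+2 - r^+2).
Proof.
move=> p0 r0.
rewrite !lnXn // !mulr2n.
have h : ln r - ln p <= r / p - 1.
  rewrite -ln_div ?posrE //; exact: ln_le_sub1 (divr_gt0 r0 p0).
have h2 : p^+2 * (ln r - ln p) <= p * r - p^+2.
  have := ler_wpM2l (ltW (exprn_gt0 2 p0)) h.
  have -> : p ^+ 2 * (r / p - 1) = p * r - p^+2.
    by field; rewrite gt_eqF.
  done.
nra.
Qed.

Lemma sq_bound (y z : R) : 0 < y < 1 -> 0 < z < 1 ->
  (y - z)^+2 / 4%:R <= (Num.sqrt y - Num.sqrt z)^+2.
Proof.
move=> /andP[y0 y1] /andP[z0 z1].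
have sy := sqr_sqrtr (ltW y0); have sz := sqr_sqrtr (ltW z0).
have py : 0 < Num.sqrt y by rewrite sqrtr_gt0.
have pz : 0 < Num.sqrt z by rewrite sqrtr_gt0.
rewrite ler_pdivrMr //.
set u := Num.sqrt y in sy py *; set v := Num.sqrt z in sz pz *.
have qy : u <= 1 by nra.
have qz : v <= 1 by nra.
have e : (y - z)^+2 = (u - v)^+2 * (u+v)^+2 by rewrite -sy -sz; ring.
rewrite e.
have : (u + v)^+2 <= 4%:R by nra.
move=> H; have := ler_wpM2l (sqr_ge0 (u - v)) H; lra.
Qed.


Definition psi (q : R) := q * ln q - q * ln (1 - q).
Definition sl (z : R) := ln z - ln (1 - z) + (1 - z)^-1.

Lemma E_tan' (y z : R) : 0 < y < 1 -> 0 < z < 1 ->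
  (y - z)^+2 / 4%:R <= y * ln y - z * ln z - (ln z + 1) * (y - z).
Proof.
move=> hy hz; refine (le_trans (sq_bound hy hz) _).
case/andP: hy => y0 _; case/andP: hz => z0 _.
have := @E_tan (Num.sqrt y) (Num.sqrt z).
rewrite !sqrtr_gt0 !sqr_sqrtr ?(ltW y0) ?(ltW z0) //; exact.
Qed.

Lemma E_tan0 (y z : R) : 0 < y -> 0 < z ->
  0 <= y * ln y - z * ln z - (ln z + 1) * (y - z).
Proof.
move=> y0 z0; apply: (le_trans (sqr_ge0 (Num.sqrt y - Num.sqrt z))).
have := @E_tan (Num.sqrt y) (Num.sqrt z).
rewrite !sqrtr_gt0 !sqr_sqrtr ?(ltW y0) ?(ltW z0) //; exact.
Qed.

Lemma psi_tan (y z : R) : 0 < y < 1 -> 0 < z < 1 ->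
  psi z + sl z * (y - z) + (y - z)^+2 / 4%:R <= psi y.
Proof.
move=> hy hz; have A := E_tan' hy hz.
case/andP: hy => y0 y1; case/andP: hz => z0 z1.
have B := @E_tan0 (1 - y) (1 - z); rewrite !subr_gt0 in B.
have {B} B := B y1 z1.
have L : ln (1 - y) - ln (1 - z) <= (z - y) * (1 - z)^-1.
  rewrite -ln_div ?posrE ?subr_gt0 //.
  apply: le_trans (ln_le_sub1 _) _; first by rewrite divr_gt0 // subr_gt0.
  rewrite le_eqVlt; apply/orP; left; apply/eqP; field.
  by rewrite subr_eq0 gt_eqF.
rewrite /psi /sl; nra.
Qed.

Lemma comb (fx fy fz s c x y t : R) : 0 <= t <= 1 ->
  fz + s * (x - (t * x + (1 - t) * y)) + c * (x - (t * x + (1 - t) * y))^+2 <= fx ->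
  fz + s * (y - (t * x + (1 - t) * y)) + c * (y - (t * x + (1 - t) * y))^+2 <= fy ->
  fz <= t * fx + (1 - t) * fy - c * t * (1 - t) * (x - y)^+2.
Proof.
move=> /andP[t0 t1] H1 H2.
have := ler_wpM2l t0 H1; have := ler_wpM2l (_ : 0 <= 1 - t) H2.
move=> K2 K1; have {K2} K2 := K2 ltac:(lra).
nra.
Qed.


Lemma T_eq (D a b q : R) : 0 < b ->
  D * q * cost a b q = - (D * a / b) * q + (D / b) * psi q.
Proof. move=> b0; rewrite /cost /psi; field; by rewrite gt_eqF. Qed.

Lemma T_conv (D a b x y t mu : R) : 0 < D -> 0 < b ->
  0 < x < 1 -> 0 < y < 1 -> 0 <= t <= 1 -> mu / 2%:R <= D / b / 4%:R ->
  D * (t * x + (1 - t) * y) * cost a b (t * x + (1 - t) * y) <=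
  t * (D * x * cost a b x) + (1 - t) * (D * y * cost a b y)
  - mu / 2%:R * t * (1 - t) * (x - y)^+2.
Proof.
move=> D0 b0 hx hy ht hmu.
set z := t * x + (1 - t) * y.
have hz : 0 < z < 1.
  case/andP: hx => ? ?; case/andP: hy => ? ?; case/andP: ht => ? ?.
  have [xy|yx] := leP x y.
    have h1 : 0 <= t * (y - x) by apply: mulr_ge0; lra.
    have h2 : 0 <= (1 - t) * (y - x) by apply: mulr_ge0; lra.
    apply/andP; split; rewrite /z; lra.
  have h1 : 0 <= t * (x - y) by apply: mulr_ge0; lra.
  have h2 : 0 <= (1 - t) * (x - y) by apply: mulr_ge0; lra.
  apply/andP; split; rewrite /z; lra.
rewrite !T_eq //.
have k0 : 0 <= D / b by rewrite divr_ge0 // ltW.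
have tan w : 0 < w < 1 -> - (D * a / b) * z + (D / b) * psi z
    + (- (D * a / b) + (D / b) * sl z) * (w - z) + (D / b / 4%:R) * (w - z)^+2
    <= - (D * a / b) * w + (D / b) * psi w.
  move=> hw; have := ler_wpM2l k0 (psi_tan hw hz).
  move=> H; lra.
have := comb ht (tan x hx) (tan y hy).
have : 0 <= t * (1 - t) * (x - y)^+2.
  case/andP: ht => ? ?; apply: mulr_ge0; [apply: mulr_ge0; lra | exact: sqr_ge0].
move=> P H.
have := ler_wpM2r P hmu.
move=> Q; nra.
Qed.

End S.

Unset Implicit Arguments.
Set Strict Implicit.

Theorem theorem2 (R : realType) (N : nat) (hN : (1 <= N)%N)
  (B : R) (D a b : 'I_N -> R)
  (hD : forall i, 0 < D i) (hb : forall i, 0 < b i) :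
  strongly_convex_on (@open_unit_box R N) (gfun D a b B).
Proof.
set S := \sum_(i < N) b i / D i.
have S0 : 0 <= S by apply: sumr_ge0 => i _; rewrite divr_ge0 // ltW.
exists ((2%:R * (1 + S))^-1); split.
  by rewrite invr_gt0 mulr_gt0 //; lra.
move=> x y t hx hy ht; rewrite /gfun /sqnorm.
have E : t * (\sum_(i < N) D i * x i * cost (a i) (b i) (x i) - B) +
   (1 - t) * (\sum_(i < N) D i * y i * cost (a i) (b i) (y i) - B) -
   (2%:R * (1 + S))^-1 / 2%:R * t * (1 - t) * \sum_(i < N) (x i - y i) ^+ 2
  = \sum_(i < N) (t * (D i * x i * cost (a i) (b i) (x i))
      + (1 - t) * (D i * y i * cost (a i) (b i) (y i))
      - (2%:R * (1 + S))^-1 / 2%:R * t * (1 - t) * (x i - y i) ^+ 2) - B.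
  rewrite sumrB big_split /= -!mulr_sumr; ring.
rewrite E lerD2r; apply: ler_sum => i _.
apply: T_conv => //.
have bi : b i / D i <= S.
  rewrite /S (bigD1 i) //= lerDl; apply: sumr_ge0 => j _.
  by rewrite divr_ge0 // ltW.
have Di := hD i; have bi0 := hb i.
have k : (1 + S)^-1 <= D i / b i.
  have bD : 0 < b i / D i by rewrite divr_gt0.
  rewrite -[D i / b i]invf_div lef_pV2 ?posrE //; lra.
have e : (2%:R * (1 + S))^-1 / 2%:R = (1 + S)^-1 / 4%:R.
  by field; lra.
rewrite e; lra.
Qed.
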